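(* Let $P\in\mathbb{R}^{n\times n}$ be symmetric with eigenvalues $\lambda_1\ge\dots\ge\lambda_n$ and orthonormal eigenvectors $u_1,\dots,u_n$ ($Pu_s=\lambda_su_s$). Let $H\in\mathbb{R}^{n\times n}$ be symmetric, $A=P+H$, with eigenvalues $\tilde\lambda_1\ge\dots\ge\tilde\lambda_n$ and orthonormal eigenvectors $\tilde u_1,\dots,\tilde u_n$ ($A\tilde u_s=\tilde\lambda_s\tilde u_s$). Fix $t\in[n]$ such that $\lambda_t$ has multiplicity one, let $\Delta_t=\min\{|\lambda_t-\lambda_s|: s\neq t\}$, and assume $\|H\|<|\lambda_t|/2$. For $u\in\mathbb{R}^n$ and $\lambda\neq0$ define the vector $\xi(u;H,\lambda)\in\mathbb{R}^n$ by $\xi_j(u;H,\lambda)=\sum_{p\ge1}(2/|\lambda|)^p|(H^pu)_j|$. Then for all $j\in[n]$, $$\min_{\zeta\in\{-1,+1\}}|(\tilde u_t-\zeta u_t)_j|\le\left(\frac{4\|H\|^2}{\Delta_t^2}+\frac{2\|H\|}{|\lambda_t|}\right)|u_{t,j}|+2\xi_j(u_t;H,\lambda_t)+\frac{4\sqrt2\|H\|}{\Delta_t}\sum_{s\ne t}\left|\frac{\lambda_s}{\lambda_t}\right|\big(|u_{s,j}|+\xi_j(u_s;H,\lambda_t)\big).$$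
   Context: $\|\cdot\|$ denotes the spectral norm of a matrix. The series defining $\xi_j$ may take the value $+\infty$, in which case the bound is trivial. *)

(* Defs.v *)
(* real matrices of size n are functions nat -> nat -> R,
   only the entries with indices < n are relevant; vectors are nat -> R. *)
From Stdlib Require Export Reals.
Open Scope R_scope.

Fixpoint rsum (n : nat) (f : nat -> R) : R :=
  match n with
  | O => 0
  | S m => rsum m f + f m
  end.

Definition mv (n : nat) (M : nat -> nat -> R) (x : nat -> R) : nat -> R :=
  fun i => rsum n (fun k => M i k * x k).

Definition dot (n : nat) (x y : nat -> R) : R := rsum n (fun k => x k * y k).

Definition vnorm (n : nat) (x : nat -> R) : R := sqrt (dot n x x).

Fixpoint mpowv (n : nat) (M : nat -> nat -> R) (p : nat) (x : nat -> R) : nat -> R :=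
  match p with
  | O => x
  | S q => mv n M (mpowv n M q x)
  end.

Definition symmetric (n : nat) (M : nat -> nat -> R) : Prop :=
  forall i j, (i < n)%nat -> (j < n)%nat -> M i j = M j i.

Definition is_spectral_norm (n : nat) (M : nat -> nat -> R) (s : R) : Prop :=
  is_lub (fun r => exists x : nat -> R, vnorm n x = 1 /\ r = vnorm n (mv n M x)) s.

(* lam 0 >= ... >= lam (n-1), u s = s-th eigenvector (u s j = its j-th entry),
   orthonormal, M u_s = lam_s u_s *)
Definition ordered_eigendecomp (n : nat) (M : nat -> nat -> R)
  (lam : nat -> R) (u : nat -> nat -> R) : Prop :=
  (forall s s', (s <= s')%nat -> (s' < n)%nat -> lam s' <= lam s) /\
  (forall s s', (s < n)%nat -> (s' < n)%nat ->
      dot n (u s) (u s') = if Nat.eq_dec s s' then 1 else 0) /\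
  (forall s i, (s < n)%nat -> (i < n)%nat -> mv n M (u s) i = lam s * u s i).

(* term p >= 1 of the series xi_j(x;H,lam) = sum_{p>=1} (2/|lam|)^p |(H^p x)_j|,
   reindexed by k = p - 1 *)
Definition xi_term (n : nat) (H : nat -> nat -> R) (lam : R) (x : nat -> R) (j : nat)
  (k : nat) : R :=
  (2 / Rabs lam) ^ (S k) * Rabs (mpowv n H (S k) x j).

(* Main.v *)
Require Import Defs.
From Stdlib Require Import Reals Lra Lia Psatz Classical.
Open Scope R_scope.

Lemma rsum_ext m f g : (forall i, (i < m)%nat -> f i = g i) -> rsum m f = rsum m g.
Proof. induction m; simpl; intros Hf; auto. rewrite IHm by (intros; apply Hf; lia). rewrite Hf by lia. auto. Qed.

Lemma rsum_plus m f g : rsum m (fun i => f i + g i) = rsum m f + rsum m g.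
Proof. induction m; simpl; [lra|]. rewrite IHm; lra. Qed.

Lemma rsum_minus m f g : rsum m (fun i => f i - g i) = rsum m f - rsum m g.
Proof. induction m; simpl; [lra|]. rewrite IHm; lra. Qed.

Lemma rsum_scal m a f : rsum m (fun i => a * f i) = a * rsum m f.
Proof. induction m; simpl; [lra|]. rewrite IHm; lra. Qed.

Lemma rsum_scalr m a f : rsum m (fun i => f i * a) = rsum m f * a.
Proof. induction m; simpl; [lra|]. rewrite IHm; lra. Qed.

Lemma rsum_zero m f : (forall i, (i < m)%nat -> f i = 0) -> rsum m f = 0.
Proof. intros; rewrite (rsum_ext m f (fun _ => 0)) by auto. induction m; simpl; [lra|]. rewrite IHm; [lra|intros; auto]. Qed.

Lemma rsum_le m f g : (forall i, (i < m)%nat -> f i <= g i) -> rsum m f <= rsum m g.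
Proof. induction m; simpl; intros Hf; [lra|]. specialize (IHm (fun i Hi => Hf i ltac:(lia))). specialize (Hf m ltac:(lia)). lra. Qed.

Lemma rsum_nonneg m f : (forall i, (i < m)%nat -> 0 <= f i) -> 0 <= rsum m f.
Proof. intros; replace 0 with (rsum m (fun _ => 0)). apply rsum_le; auto. apply rsum_zero; auto. Qed.

Lemma rsum_single_le m f s : (forall i, (i < m)%nat -> 0 <= f i) -> (s < m)%nat -> f s <= rsum m f.
Proof. induction m; simpl; intros Hf Hs; [lia|].
  assert (0 <= rsum m f) by (apply rsum_nonneg; intros; apply Hf; lia).
  destruct (Nat.eq_dec s m). subst; specialize (Hf m ltac:(lia)); lra.
  specialize (IHm (fun i Hi => Hf i ltac:(lia)) ltac:(lia)). specialize (Hf m ltac:(lia)). lra. Qed.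

Lemma rsum_abs m f : Rabs (rsum m f) <= rsum m (fun i => Rabs (f i)).
Proof. induction m; simpl. rewrite Rabs_R0; lra. eapply Rle_trans. apply Rabs_triang. lra. Qed.

Lemma rsum_swap m k (f : nat -> nat -> R) :
  rsum m (fun i => rsum k (fun l => f i l)) = rsum k (fun l => rsum m (fun i => f i l)).
Proof. induction m; simpl. symmetry; apply rsum_zero; auto. rewrite IHm, <- rsum_plus. auto. Qed.

Lemma rsum_delta m (c : nat -> R) s :
  rsum m (fun i => c i * (if Nat.eq_dec s i then 1 else 0)) = if Nat.ltb s m then c s else 0.
Proof. induction m; simpl. auto. rewrite IHm.
  destruct (Nat.eq_dec s m); subst.
  - rewrite (proj2 (Nat.ltb_ge m m)) by lia. rewrite (proj2 (Nat.ltb_lt m (S m))) by lia. lra.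
  - destruct (Nat.ltb s m) eqn:E; [apply Nat.ltb_lt in E|apply Nat.ltb_ge in E].
    rewrite (proj2 (Nat.ltb_lt s (S m))) by lia; lra.
    rewrite (proj2 (Nat.ltb_ge s (S m))) by lia; lra. Qed.

Lemma rsum_split m f t : (t < m)%nat ->
  rsum m f = f t + rsum m (fun s => if Nat.eq_dec s t then 0 else f s).
Proof. induction m; simpl; intros Ht; [lia|].
  destruct (Nat.eq_dec m t).
  - subst. replace (rsum t (fun s => if Nat.eq_dec s t then 0 else f s)) with (rsum t f). lra.
    apply rsum_ext; intros; destruct (Nat.eq_dec i t); [lia|auto].
  - rewrite IHm by lia. lra. Qed.

Definition depgoal k m (v : nat -> nat -> R) := exists c : nat -> R,
  (exists i, (i < m)%nat /\ c i <> 0) /\ forall r, (r < k)%nat -> rsum m (fun i => c i * v i r) = 0.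

Lemma dep k : forall m v, (k < m)%nat -> depgoal k m v.
Proof.
  induction k; intros m v Hm.
  - exists (fun _ => 1). split. exists 0%nat; split; [lia|lra]. intros; lia.
  - destruct m as [|m']; [lia|].
    assert (C1 : forall v, v m' k <> 0 -> depgoal (S k) (S m') v).
    { clear v. intros v Hv.
      set (w := fun i r => v i r - (v i k / v m' k) * v m' r).
      destruct (IHk m' w ltac:(lia)) as [d [[i0 [Hi0 Hd0]] Hd]].
      exists (fun i => if Nat.ltb i m' then d i else - rsum m' (fun i => d i * v i k) / v m' k).
      split. exists i0; split; [lia|]. rewrite (proj2 (Nat.ltb_lt _ _) Hi0); auto.
      intros r Hr. simpl. rewrite Nat.ltb_irrefl.
      rewrite (rsum_ext _ _ (fun i => d i * w i r + (d i * v i k) * (v m' r / v m' k))).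
      2:{ intros i Hi. rewrite (proj2 (Nat.ltb_lt _ _) Hi). unfold w. field. auto. }
      rewrite rsum_plus, rsum_scalr.
      assert (rsum m' (fun i => d i * w i r) = 0).
      { destruct (Nat.eq_dec r k). subst. apply rsum_zero. intros; unfold w; field; auto.
        apply Hd; lia. }
      rewrite H. field. auto. }
    destruct (Req_dec (v m' k) 0) as [Hz|Hnz]; [|apply C1; auto].
    destruct (classic (exists i0, (i0 < S m')%nat /\ v i0 k <> 0)) as [[i0 [Hi0 Hv0]]|Hall].
    + assert (i0 <> m') by (intro; subst; auto).
      set (v' := fun i r => v i r + (if Nat.eq_dec m' i then v i0 r else 0)).
      destruct (C1 v') as [c [[i1 [Hi1 Hc1]] Hc]].
      { unfold v'. destruct (Nat.eq_dec m' m'); [|lia]. lra. }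
      exists (fun i => c i + (if Nat.eq_dec i0 i then c m' else 0)). split.
      * apply NNPP; intro Hn.
        assert (Hz0 : forall i, (i < S m')%nat -> c i + (if Nat.eq_dec i0 i then c m' else 0) = 0).
        { intros i Hi. apply NNPP; intro; apply Hn; eauto. }
        assert (Hcm : c m' = 0). { specialize (Hz0 m' ltac:(lia)). destruct (Nat.eq_dec i0 m'); [lia|lra]. }
        apply Hc1. specialize (Hz0 i1 Hi1). destruct (Nat.eq_dec i0 i1); lra.
      * intros r Hr. transitivity (rsum (S m') (fun i => c i * v' i r)); [|apply Hc; auto]. unfold v'.
        rewrite (rsum_ext _ _ (fun i => c i * v i r + (c m' * v i r) * (if Nat.eq_dec i0 i then 1 else 0))).
        2:{ intros; destruct (Nat.eq_dec i0 i); ring. }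
        rewrite (rsum_ext _ (fun i => c i * _) (fun i => c i * v i r + (c i * v i0 r) * (if Nat.eq_dec m' i then 1 else 0))).
        2:{ intros; destruct (Nat.eq_dec m' i); ring. }
        rewrite !rsum_plus, !(rsum_delta _ (fun i => _ * _)).
        rewrite (proj2 (Nat.ltb_lt _ _) Hi0), (proj2 (Nat.ltb_lt m' (S m'))) by lia. ring.
    + destruct (IHk (S m') v ltac:(lia)) as [c [Hc1 Hc]]. exists c; split; auto.
      intros r Hr. destruct (Nat.eq_dec r k). subst. apply rsum_zero. intros i Hi.
      assert (v i k = 0) by (apply NNPP; intro; apply Hall; eauto). rewrite H; lra.
      apply Hc; lia.
Qed.

Lemma mv_ext n M x y i : (forall l, (l < n)%nat -> x l = y l) -> mv n M x i = mv n M y i.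
Proof. intros; unfold mv; apply rsum_ext; intros; rewrite H; auto. Qed.

Lemma dot_ext n x y x' y' : (forall l, (l < n)%nat -> x l = x' l) -> (forall l, (l < n)%nat -> y l = y' l) ->
  dot n x y = dot n x' y'.
Proof. intros; unfold dot; apply rsum_ext; intros; rewrite H, H0; auto. Qed.

Lemma dot_comm n x y : dot n x y = dot n y x.
Proof. unfold dot; apply rsum_ext; intros; ring. Qed.

Lemma dot_lin n m (y : nat -> R) (c : nat -> R) (z : nat -> nat -> R) :
  dot n y (fun l => rsum m (fun s => c s * z s l)) = rsum m (fun s => c s * dot n y (z s)).
Proof. unfold dot. rewrite (rsum_ext n _ (fun l => rsum m (fun s => c s * (y l * z s l)))).
  rewrite rsum_swap. apply rsum_ext; intros; rewrite rsum_scal; auto.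
  intros; rewrite <- rsum_scal. apply rsum_ext; intros; ring. Qed.

Lemma mv_lin n M m (c : nat -> R) (z : nat -> nat -> R) i :
  mv n M (fun l => rsum m (fun s => c s * z s l)) i = rsum m (fun s => c s * mv n M (z s) i).
Proof. exact (dot_lin n m (M i) c z). Qed.

Lemma mpow_lin n M p m (c : nat -> R) (z : nat -> nat -> R) i :
  mpowv n M p (fun l => rsum m (fun s => c s * z s l)) i = rsum m (fun s => c s * mpowv n M p (z s) i).
Proof. revert i; induction p; intros; simpl. auto.
  rewrite (mv_ext n M _ (fun l => rsum m (fun s => c s * mpowv n M p (z s) l))) by auto.
  apply mv_lin. Qed.

Lemma mv_add n M a b x y i : mv n M (fun l => a * x l + b * y l) i = a * mv n M x i + b * mv n M y i.
Proof. unfold mv. rewrite <- !rsum_scal, <- rsum_plus. apply rsum_ext; intros; ring. Qed.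

Lemma mpow_add n M p a b x y i :
  mpowv n M p (fun l => a * x l + b * y l) i = a * mpowv n M p x i + b * mpowv n M p y i.
Proof. revert i; induction p; intros; simpl. auto.
  rewrite (mv_ext n M _ (fun l => a * mpowv n M p x l + b * mpowv n M p y l)) by auto.
  apply mv_add. Qed.

Lemma mpow_ext n M p x y i : (forall l, (l < n)%nat -> x l = y l) -> (i < n)%nat ->
  mpowv n M p x i = mpowv n M p y i.
Proof. intros Hx Hi; destruct p; simpl. auto. apply mv_ext. intros l Hl.
  revert l Hl; induction p; simpl; intros; auto. apply mv_ext; auto. Qed.

Lemma mpow_comm n M p x i : mpowv n M p (mv n M x) i = mv n M (mpowv n M p x) i.
Proof. revert i; induction p; intros; simpl; auto. apply mv_ext; auto. Qed.

Lemma dot_sym_mv n M x y : symmetric n M -> dot n x (mv n M y) = dot n (mv n M x) y.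
Proof. intros HM; unfold dot, mv.
  rewrite (rsum_ext n (fun k => x k * _) (fun k => rsum n (fun l => x k * M k l * y l))).
  rewrite rsum_swap. apply rsum_ext; intros. rewrite <- rsum_scalr. apply rsum_ext; intros.
  rewrite HM by auto; ring.
  intros; rewrite <- rsum_scal; apply rsum_ext; intros; ring. Qed.

Section Ortho.
Variable n : nat.
Variable u : nat -> nat -> R.
Hypothesis Hon : forall s s', (s < n)%nat -> (s' < n)%nat ->
      dot n (u s) (u s') = if Nat.eq_dec s s' then 1 else 0.

Lemma coef_extract (c : nat -> R) s : (s < n)%nat ->
  dot n (u s) (fun l => rsum n (fun i => c i * u i l)) = c s.
Proof. intros Hs. rewrite dot_lin. rewrite (rsum_ext _ _ (fun i => c i * (if Nat.eq_dec s i then 1 else 0))).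
  rewrite rsum_delta. rewrite (proj2 (Nat.ltb_lt _ _) Hs); auto.
  intros; rewrite Hon; auto. Qed.

Lemma complete x l : (l < n)%nat -> x l = rsum n (fun s => dot n (u s) x * u s l).
Proof.
  intros Hl.
  destruct (dep n (S n) (fun i r => if Nat.ltb i n then u i r else x r) ltac:(lia)) as [c [[i1 [Hi1 Hc1]] Hc]].
  set (y := fun l => rsum n (fun i => c i * u i l)).
  assert (Hy : forall r, (r < n)%nat -> y r + c n * x r = 0).
  { intros r Hr. rewrite <- (Hc r Hr). simpl. rewrite Nat.ltb_irrefl. unfold y. f_equal.
    apply rsum_ext; intros i Hi; rewrite (proj2 (Nat.ltb_lt _ _) Hi); auto. }
  destruct (Req_dec (c n) 0) as [Hcn|Hcn].
  - exfalso. assert (i1 <> n) by (intro; subst; auto).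
    apply Hc1. rewrite <- (coef_extract c i1) by lia. fold y.
    unfold dot; apply rsum_zero; intros r Hr. specialize (Hy r Hr). rewrite Hcn in Hy. nra.
  - rewrite (rsum_ext _ _ (fun s => (- / c n) * (c s * u s l))).
    rewrite rsum_scal. fold (y l). specialize (Hy l Hl). field_simplify_eq; auto. lra.
    intros s Hs. rewrite (dot_ext n (u s) x (u s) (fun r => (- / c n) * y r)); auto.
    replace (dot n (u s) (fun r => - / c n * y r)) with (- / c n * dot n (u s) y) by (unfold dot; rewrite <- rsum_scal; apply rsum_ext; intros; ring). unfold y. rewrite coef_extract by auto. ring.
    intros r Hr. specialize (Hy r Hr). field_simplify_eq; auto. lra.
Qed.

Lemma parseval x y : dot n x y = rsum n (fun s => dot n (u s) x * dot n (u s) y).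
Proof. rewrite (dot_ext n x y (fun l => rsum n (fun s => dot n (u s) x * u s l)) y).
  rewrite dot_comm, dot_lin. apply rsum_ext; intros; rewrite !(dot_comm n _ (u _)); auto.
  apply complete. auto. Qed.

Lemma quadform M lam x : (forall s i, (s < n)%nat -> (i < n)%nat -> mv n M (u s) i = lam s * u s i) ->
  dot n x (mv n M x) = rsum n (fun s => lam s * (dot n (u s) x) ^ 2).
Proof. intros HM. rewrite (dot_ext n x (mv n M x) x (fun i => rsum n (fun s => (dot n (u s) x * lam s) * u s i))).
  rewrite dot_lin. apply rsum_ext; intros; rewrite dot_comm; ring.
  auto. intros i Hi. rewrite (mv_ext n M x (fun l => rsum n (fun s => dot n (u s) x * u s l))).
  rewrite mv_lin. apply rsum_ext; intros; rewrite HM; auto; ring. apply complete. Qed.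

End Ortho.

Lemma dot_nonneg n x : 0 <= dot n x x.
Proof. unfold dot; apply rsum_nonneg; intros; nra. Qed.

Lemma entry_le n x j : (j < n)%nat -> (x j) ^ 2 <= dot n x x.
Proof. intros; unfold dot. replace (x j ^ 2) with (x j * x j) by ring.
  apply (rsum_single_le n (fun k => x k * x k)); auto; intros; nra. Qed.

Lemma entry_abs_le n x j : (j < n)%nat -> Rabs (x j) <= sqrt (dot n x x).
Proof. intros Hj. rewrite <- sqrt_Rsqr_abs. apply sqrt_le_1_alt. unfold Rsqr.
  pose proof (entry_le n x j Hj). lra. Qed.

Lemma dot_zero n x : dot n x x = 0 -> forall l, (l < n)%nat -> x l = 0.
Proof. intros Hd l Hl. pose proof (entry_le n x l Hl). rewrite Hd in H. nra. Qed.

Lemma dot_expand n x y c : dot n (fun l => x l + c * y l) (fun l => x l + c * y l) =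
  dot n x x + 2 * c * dot n x y + c ^ 2 * dot n y y.
Proof. unfold dot. rewrite <- !rsum_scal, <- !rsum_plus. apply rsum_ext; intros; ring. Qed.

Section Spec.
Variable n : nat.
Variable H : nat -> nat -> R.
Variable h : R.
Hypothesis Hs : is_spectral_norm n H h.
Variable e : nat -> R.
Hypothesis He : dot n e e = 1.

Lemma h_nonneg : 0 <= h.
Proof. destruct Hs as [Hub _]. apply Rle_trans with (vnorm n (mv n H e)).
  apply sqrt_pos. apply Hub. exists e. split; auto. unfold vnorm; rewrite He; apply sqrt_1. Qed.

Lemma Hbound x : dot n (mv n H x) (mv n H x) <= h ^ 2 * dot n x x.
Proof.
  pose proof h_nonneg as Hh.
  destruct (Req_dec (dot n x x) 0) as [Hd|Hd].
  - rewrite Hd. unfold dot at 1. rewrite rsum_zero. lra. intros i Hi.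
    unfold mv. rewrite rsum_zero. ring. intros; rewrite (dot_zero n x Hd) by auto; ring.
  - pose proof (dot_nonneg n x) as Hd0. set (d := dot n x x) in *.
    assert (Hsd : 0 < sqrt d) by (apply sqrt_lt_R0; lra).
    set (y := fun l => / sqrt d * x l).
    assert (Hy : dot n y y = 1).
    { unfold y, dot. rewrite (rsum_ext _ _ (fun k => / d * (x k * x k))).
      rewrite rsum_scal. fold (dot n x x). fold d. field; auto.
      intros. assert (/ d = / sqrt d * / sqrt d) by (rewrite <- Rinv_mult, sqrt_sqrt; lra). rewrite H1. ring. }
    destruct Hs as [Hub _].
    assert (Hv : vnorm n (mv n H y) <= h). { apply Hub. exists y. split; auto. unfold vnorm; rewrite Hy; apply sqrt_1. }
    assert (Hmy : dot n (mv n H y) (mv n H y) = / d * dot n (mv n H x) (mv n H x)).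
    { unfold dot. rewrite <- rsum_scal. apply rsum_ext. intros k Hk.
      unfold y. unfold mv. rewrite (rsum_ext _ (fun k0 => H k k0 * (/ sqrt d * x k0)) (fun k0 => / sqrt d * (H k k0 * x k0))) by (intros; ring).
      rewrite rsum_scal. fold (mv n H x k).
      assert (/ d = / sqrt d * / sqrt d) by (rewrite <- Rinv_mult, sqrt_sqrt; lra).
      rewrite H0. ring. }
    unfold vnorm in Hv. pose proof (dot_nonneg n (mv n H y)).
    assert (dot n (mv n H y) (mv n H y) <= h ^ 2).
    { rewrite <- (sqrt_sqrt (dot n (mv n H y) (mv n H y))) by auto. pose proof (sqrt_pos (dot n (mv n H y) (mv n H y))). nra. }
    rewrite Hmy in H1. apply Rmult_le_compat_l with (r := d) in H1; [|lra].
    rewrite <- Rmult_assoc, Rinv_r in H1 by auto. lra.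
Qed.

Lemma mpow_bound p x : dot n (mpowv n H p x) (mpowv n H p x) <= h ^ (2 * p) * dot n x x.
Proof. induction p; cbn [mpowv]. simpl; lra. eapply Rle_trans. apply Hbound.
  replace (h ^ (2 * S p)) with (h ^ 2 * h ^ (2 * p)) by (rewrite <- pow_add; f_equal; lia).
  rewrite Rmult_assoc. apply Rmult_le_compat_l; [nra|auto]. Qed.

Lemma quad_bound x : Rabs (dot n x (mv n H x)) <= h * dot n x x.
Proof.
  pose proof h_nonneg as Hh. pose proof (Hbound x) as HB. pose proof (dot_nonneg n x).
  set (q := dot n x (mv n H x)). set (d := dot n x x) in *.
  destruct (Req_dec h 0) as [Hh0|Hh0].
  - rewrite Hh0 in HB. pose proof (dot_nonneg n (mv n H x)).
    assert (Hz : dot n (mv n H x) (mv n H x) = 0) by nra.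
    unfold q, dot. rewrite rsum_zero. rewrite Rabs_R0; nra.
    intros i Hi. rewrite (dot_zero _ _ Hz i Hi). ring.
  - pose proof (dot_nonneg n (fun l => mv n H x l + h * x l)) as P1.
    pose proof (dot_nonneg n (fun l => mv n H x l + (- h) * x l)) as P2.
    rewrite dot_expand in P1, P2. rewrite (dot_comm n (mv n H x) x) in P1, P2. fold q d in P1, P2.
    apply Rabs_le. split; nra.
Qed.

End Spec.

Lemma rsum_prefix m k f : (k <= m)%nat -> (forall i, (k <= i < m)%nat -> f i = 0) -> rsum m f = rsum k f.
Proof. induction m; intros Hk Hf. assert (k = 0%nat) by lia; subst; auto.
  destruct (Nat.eq_dec k (S m)). subst; auto. simpl. rewrite IHm by (auto; lia || (intros; apply Hf; lia)).
  rewrite Hf by lia. ring. Qed.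

Lemma weyl n M1 M2 lam1 u1 lam2 u2 h t :
  ordered_eigendecomp n M1 lam1 u1 -> ordered_eigendecomp n M2 lam2 u2 -> (t < n)%nat ->
  (forall x, dot n x (mv n M2 x) >= dot n x (mv n M1 x) - h * dot n x x) ->
  lam2 t >= lam1 t - h.
Proof.
  intros [Ho1 [On1 Ev1]] [Ho2 [On2 Ev2]] Ht Hq.
  destruct (dep t (S t) (fun i r => dot n (u2 r) (u1 i)) ltac:(lia)) as [c [[i1 [Hi1 Hc1]] Hc]].
  set (c' := fun i => if Nat.ltb i (S t) then c i else 0).
  set (x := fun l => rsum n (fun i => c' i * u1 i l)).
  assert (Ha : forall s, (s < n)%nat -> dot n (u1 s) x = c' s) by (intros; unfold x; apply coef_extract; auto).
  assert (Hb : forall r, (r < t)%nat -> dot n (u2 r) x = 0).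
  { intros r Hr. unfold x. rewrite dot_lin.
    transitivity (rsum (S t) (fun i => c i * dot n (u2 r) (u1 i))); [|apply Hc; auto].
    rewrite (rsum_prefix n (S t)). apply rsum_ext.
    intros i Hi. unfold c'. rewrite (proj2 (Nat.ltb_lt i (S t))) by lia. ring. lia.
    intros i Hi. unfold c'. rewrite (proj2 (Nat.ltb_ge i (S t))) by lia. ring. }
  assert (Hd : dot n x x = rsum n (fun s => (c' s) ^ 2)).
  { rewrite (parseval n u1 On1). apply rsum_ext; intros; rewrite Ha; auto; ring. }
  assert (Hdpos : 0 < dot n x x).
  { rewrite Hd. apply Rlt_le_trans with ((c' i1) ^ 2).
    unfold c'. rewrite (proj2 (Nat.ltb_lt i1 (S t))) by lia. nra.
    apply (rsum_single_le n (fun s => c' s ^ 2)). intros; apply pow2_ge_0. lia. }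
  assert (H1 : dot n x (mv n M1 x) >= lam1 t * dot n x x).
  { rewrite (quadform n u1 On1 M1 lam1) by auto. rewrite Hd, <- rsum_scal. apply Rle_ge, rsum_le.
    intros s Hs. rewrite Ha by auto. destruct (Compare_dec.le_lt_dec s t).
    apply Rmult_le_compat_r. apply pow2_ge_0. apply Ho1; lia.
    unfold c'. rewrite (proj2 (Nat.ltb_ge s (S t))) by lia. lra. }
  assert (H2 : dot n x (mv n M2 x) <= lam2 t * dot n x x).
  { rewrite (quadform n u2 On2 M2 lam2) by auto. rewrite (parseval n u2 On2), <- rsum_scal. apply rsum_le.
    intros r Hr. destruct (Compare_dec.le_lt_dec t r).
    replace (dot n (u2 r) x * dot n (u2 r) x) with (dot n (u2 r) x ^ 2) by ring.
    apply Rmult_le_compat_r. apply pow2_ge_0. apply Ho2; lia.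
    rewrite Hb by lia. lra. }
  specialize (Hq x). nra.
Qed.

Lemma sq_le_abs x h : x ^ 2 <= h ^ 2 -> 0 <= h -> Rabs x <= h.
Proof. intros. apply Rabs_le; split; nra. Qed.

Lemma rsum_shift N f : rsum (S N) f = f 0%nat + rsum N (fun k => f (S k)).
Proof. induction N. simpl; ring. change (rsum (S (S N)) f) with (rsum (S N) f + f (S N)).
  rewrite IHN. simpl. ring. Qed.

Lemma rsum_sumf N f : rsum (S N) f = sum_f_R0 f N.
Proof. induction N. simpl; ring. change (rsum (S (S N)) f) with (rsum (S N) f + f (S N)). rewrite IHN. simpl. auto. Qed.

Lemma partial_le f l N : infinite_sum f l -> (forall k, 0 <= f k) -> rsum N f <= l.
Proof. intros Hs Hf. assert (Hu : Un_cv (fun m => sum_f_R0 f m) l) by exact Hs.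
  destruct N. simpl. pose proof (sum_incr f 0 l Hu Hf). simpl in H. specialize (Hf 0%nat). lra.
  rewrite rsum_sumf. apply sum_incr; auto. Qed.

Lemma abs_coef rho a : 0 <= a <= 1 -> Rabs (rho * a - 1) <= Rabs (rho - 1) + (1 - a).
Proof. intros Ha. replace (rho * a - 1) with ((rho - 1) * a + (a - 1)) by ring.
  eapply Rle_trans. apply Rabs_triang. rewrite Rabs_mult, (Rabs_pos_eq a) by lra.
  rewrite (Rabs_left1 (a - 1)) by lra. pose proof (Rabs_pos (rho - 1)). nra. Qed.

Lemma inv_pow_le m x y : 0 < x -> / x <= y -> / x ^ m <= y ^ m.
Proof. intros. rewrite <- pow_inv. apply pow_incr. split; auto. left; apply Rinv_0_lt_compat; auto. Qed.

Lemma mv_sum n P H x i : mv n (fun i j => P i j + H i j) x i = mv n P x i + mv n H x i.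
Proof. unfold mv. rewrite <- rsum_plus. apply rsum_ext; intros; ring. Qed.

Lemma dot_plus_r n x y z : dot n x (fun l => y l + z l) = dot n x y + dot n x z.
Proof. unfold dot. rewrite <- rsum_plus. apply rsum_ext; intros; ring. Qed.

Lemma abs_between x b : Rabs x <= b -> - b <= x <= b.
Proof. intros. pose proof (Rle_abs x). pose proof (Rle_abs (- x)). rewrite Rabs_Ropp in H1. lra. Qed.

Lemma drop_geom X B q : 0 <= q < 1 -> (forall N, X <= B + q ^ (S N)) -> X <= B.
Proof. intros Hq HN. destruct (Rle_lt_dec X B) as [|Hlt]; auto. exfalso.
  destruct (pow_lt_1_zero q ltac:(rewrite Rabs_pos_eq; lra) (X - B) ltac:(lra)) as [N HN'].
  specialize (HN' (S N) ltac:(lia)). specialize (HN N). rewrite Rabs_pos_eq in HN' by (apply pow_le; lra). lra. Qed.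

Theorem lemmaB2 (n : nat) (P H : nat -> nat -> R)
  (lam : nat -> R) (u : nat -> nat -> R)
  (lamt : nat -> R) (ut : nat -> nat -> R)
  (t : nat) (Delta normH : R) (xi : nat -> nat -> R) :
  symmetric n P ->
  symmetric n H ->
  ordered_eigendecomp n P lam u ->
  ordered_eigendecomp n (fun i j => P i j + H i j) lamt ut ->
  (t < n)%nat ->
  (forall s, (s < n)%nat -> s <> t -> lam s <> lam t) ->
  (forall s, (s < n)%nat -> s <> t -> Delta <= Rabs (lam t - lam s)) ->
  (exists s, (s < n)%nat /\ s <> t /\ Delta = Rabs (lam t - lam s)) ->
  is_spectral_norm n H normH ->
  normH < Rabs (lam t) / 2 ->
  (forall s j, infinite_sum (xi_term n H (lam t) (u s) j) (xi s j)) ->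
  forall j, (j < n)%nat ->
    Rmin (Rabs (ut t j - 1 * u t j)) (Rabs (ut t j - (-1) * u t j)) <=
      (4 * normH ^ 2 / Delta ^ 2 + 2 * normH / Rabs (lam t)) * Rabs (u t j)
      + 2 * xi t j
      + 4 * sqrt 2 * normH / Delta *
        rsum n (fun s => if Nat.eq_dec s t then 0
                         else Rabs (lam s / lam t) * (Rabs (u s j) + xi s j)).
Proof.
  intros HP HH EP EA Ht Hmult HDle HDex Hspec Hhlt Hxi j Hj.
  pose proof EP as [OP [OnP EvP]]. pose proof EA as [OA [OnA EvA]].
  set (w := ut t) in *. set (mu := lamt t) in *. set (h := normH) in *.
  assert (Hw1 : dot n w w = 1) by (unfold w; rewrite OnA by auto; destruct (Nat.eq_dec t t); [auto|lia]).
  pose proof (h_nonneg n H h Hspec w Hw1) as Hh0.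
  pose proof (Hbound n H h Hspec w Hw1) as HB.
  pose proof (quad_bound n H h Hspec w Hw1) as HQ.
  assert (Hlt : 2 * h < Rabs (lam t)) by lra.
  assert (Hlt0 : lam t <> 0) by (intro E; rewrite E, Rabs_R0 in Hlt; lra).
  assert (Hmu : Rabs (mu - lam t) <= h).
  { assert (QA : forall x, dot n x (mv n (fun i j => P i j + H i j) x) = dot n x (mv n P x) + dot n x (mv n H x)).
    { intros x. rewrite <- dot_plus_r. apply dot_ext; auto. intros; apply mv_sum. }
    pose proof (weyl n P _ lam u lamt ut h t EP EA Ht) as W1.
    pose proof (weyl n _ P lamt ut lam u h t EA EP Ht) as W2.
    assert (mu >= lam t - h). { apply W1. intros x. rewrite QA. specialize (HQ x). apply abs_between in HQ. lra. }
    assert (lam t >= mu - h). { apply W2. intros x. rewrite QA. specialize (HQ x). apply abs_between in HQ. lra. }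
    apply Rabs_le; lra. }
  assert (Hmua : Rabs (lam t) / 2 < Rabs mu).
  { pose proof (Rabs_triang_inv (lam t) (lam t - mu)). replace (lam t - (lam t - mu)) with mu in H0 by ring.
    rewrite <- Rabs_Ropp in Hmu. replace (- (mu - lam t)) with (lam t - mu) in Hmu by ring. lra. }
  assert (Hmu0 : mu <> 0) by (intro E; rewrite E, Rabs_R0 in Hmua; pose proof (Rabs_pos (lam t)); lra).
  assert (Hmupos : 0 < Rabs mu) by (apply Rabs_pos_lt; auto).
  assert (Hinvmu : / Rabs mu <= 2 / Rabs (lam t)).
  { assert (0 < Rabs (lam t)) by (apply Rabs_pos_lt; auto).
    apply Rmult_le_reg_l with (Rabs mu); auto. rewrite Rinv_r by lra.
    apply Rmult_le_reg_l with (Rabs (lam t)); auto. field_simplify; lra. }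
  assert (HD0 : 0 < Delta).
  { destruct HDex as [s0 [Hs0 [Hs0t E]]]. rewrite E. apply Rabs_pos_lt. intro E'.
    apply (Hmult s0 Hs0 Hs0t). lra. }
  set (a := fun s => dot n (u s) w).
  assert (Pars : rsum n (fun s => a s ^ 2) = 1).
  { rewrite <- Hw1, (parseval n u OnP). apply rsum_ext; intros; unfold a; ring. }
  assert (Ha1 : forall s, (s < n)%nat -> Rabs (a s) <= 1).
  { intros s Hs. apply sq_le_abs; [|lra]. rewrite pow1, <- Pars.
    apply (rsum_single_le n (fun s => a s ^ 2)); auto. intros; apply pow2_ge_0. }
  assert (HPw : forall s, (s < n)%nat -> dot n (u s) (mv n P w) = lam s * a s).
  { intros s Hs. rewrite dot_sym_mv by auto. unfold a, dot. rewrite <- rsum_scal.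
    apply rsum_ext; intros; rewrite EvP by auto; ring. }
  assert (HAw : forall l, (l < n)%nat -> mv n P w l + mv n H w l = mu * w l).
  { intros l Hl. rewrite <- mv_sum. apply EvA; auto. }
  assert (Hcoef : forall s, (s < n)%nat -> dot n (u s) (mv n H w) = (mu - lam s) * a s).
  { intros s Hs. pose proof (HPw s Hs).
    assert (dot n (u s) (fun l => mv n P w l + mv n H w l) = mu * a s).
    { unfold a, dot. rewrite <- rsum_scal. apply rsum_ext; intros; rewrite HAw by auto; ring. }
    rewrite dot_plus_r in H1. nra. }
  assert (HSum : rsum n (fun s => ((mu - lam s) * a s) ^ 2) <= h ^ 2).
  { specialize (HB w). rewrite Hw1, Rmult_1_r, (parseval n u OnP) in HB.
    eapply Rle_trans; [|apply HB]. right. apply rsum_ext; intros; rewrite Hcoef; auto; ring. }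
  assert (Hind : forall s, (s < n)%nat -> Rabs (mu - lam s) * Rabs (a s) <= h).
  { intros s Hs. rewrite <- Rabs_mult. apply sq_le_abs; auto. eapply Rle_trans; [|apply HSum].
    apply (rsum_single_le n (fun s => ((mu - lam s) * a s) ^ 2)); auto. intros; apply pow2_ge_0. }
  assert (Hgap : forall s, (s < n)%nat -> s <> t -> Delta - h <= Rabs (mu - lam s)).
  { intros s Hs Hst. specialize (HDle s Hs Hst).
    pose proof (Rabs_triang (mu - lam t) (lam t - lam s)). replace (mu - lam t + (lam t - lam s)) with (mu - lam s) in H0 by ring.
    pose proof (Rabs_triang_inv (lam t - lam s) (lam t - mu)). replace (lam t - lam s - (lam t - mu)) with (mu - lam s) in H1 by ring.
    rewrite <- Rabs_Ropp in Hmu. replace (- (mu - lam t)) with (lam t - mu) in Hmu by ring. lra. }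
  assert (Hoff : forall s, (s < n)%nat -> s <> t -> Rabs (a s) <= 2 * h / Delta).
  { intros s Hs Hst. pose proof (Ha1 s Hs). pose proof (Hind s Hs). pose proof (Hgap s Hs Hst).
    apply Rmult_le_reg_l with Delta; auto. field_simplify; [|lra].
    destruct (Rlt_le_dec (2 * h) Delta). pose proof (Rabs_pos (a s)). nra. nra. }
  assert (Hat : 1 - Rabs (a t) <= 4 * h ^ 2 / Delta ^ 2).
  { assert (E : 1 - a t ^ 2 = rsum n (fun s => if Nat.eq_dec s t then 0 else a s ^ 2)).
    { rewrite <- Pars, (rsum_split n _ t Ht). ring. }
    assert (1 - Rabs (a t) <= 1 - a t ^ 2).
    { pose proof (Ha1 t Ht). pose proof (Rabs_pos (a t)). rewrite <- (pow2_abs (a t)). nra. }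
    assert (1 - a t ^ 2 <= 4 * h ^ 2 / Delta ^ 2); [|lra].
    destruct (Rlt_le_dec (2 * h) Delta).
    - rewrite E. apply Rmult_le_reg_l with (Delta ^ 2 / 4). nra.
      rewrite <- rsum_scal. replace (Delta ^ 2 / 4 * (4 * h ^ 2 / Delta ^ 2)) with (h ^ 2) by (field; lra).
      eapply Rle_trans; [|apply HSum]. rewrite (rsum_split n (fun s => ((mu - lam s) * a s) ^ 2) t Ht).
      assert (0 <= ((mu - lam t) * a t) ^ 2) by apply pow2_ge_0.
      assert (rsum n (fun s => Delta ^ 2 / 4 * (if Nat.eq_dec s t then 0 else a s ^ 2)) <=
              rsum n (fun s => if Nat.eq_dec s t then 0 else ((mu - lam s) * a s) ^ 2)); [|lra].
      apply rsum_le. intros s Hs. destruct (Nat.eq_dec s t). lra.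
      pose proof (Hgap s Hs n0).
      assert (Delta / 2 <= Rabs (mu - lam s)) by lra.
      replace (((mu - lam s) * a s) ^ 2) with ((mu - lam s) ^ 2 * a s ^ 2) by ring.
      rewrite <- (pow2_abs (mu - lam s)). apply Rmult_le_compat_r. apply pow2_ge_0.
      replace (Delta ^ 2 / 4) with ((Delta / 2) ^ 2) by field. apply pow_incr; lra.
    - pose proof (pow2_ge_0 (a t)). apply Rle_trans with 1. lra.
      apply Rmult_le_reg_l with (Delta ^ 2). nra. field_simplify; nra. }
  assert (Hexp : forall N k, (k < n)%nat ->
     mpowv n H N w k = mpowv n H N (mv n P w) k / mu + mpowv n H (S N) w k / mu).
  { intros N k Hk.
    rewrite (mpow_ext n H N w (fun l => / mu * mv n P w l + / mu * mv n H w l)); auto.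
    rewrite mpow_add, mpow_comm. simpl. unfold Rdiv. ring.
    intros l Hl. rewrite <- Rmult_plus_distr_l, HAw by auto. field. auto. }
  assert (Hneu : forall N, w j = rsum (S N) (fun p => mpowv n H p (mv n P w) j / mu ^ (S p))
                                + mpowv n H (S N) w j / mu ^ (S N)).
  { induction N.
    - pose proof (Hexp 0%nat j Hj) as E0. simpl in E0 |- *. rewrite E0 at 1. field. auto.
    - rewrite IHN. change (rsum (S (S N)) ?f) with (rsum (S N) f + f (S N)).
      rewrite (Hexp (S N) j Hj). rewrite <- !tech_pow_Rmult. field. split; auto. apply pow_nonzero; auto. }
  assert (HPexp : forall p, mpowv n H p (mv n P w) j = rsum n (fun s => (lam s * a s) * mpowv n H p (u s) j)).
  { intros p. rewrite (mpow_ext n H p (mv n P w) (fun l => rsum n (fun s => (lam s * a s) * u s l))); auto.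
    apply mpow_lin. intros l Hl. rewrite (complete n u OnP (mv n P w) l Hl). apply rsum_ext; intros; rewrite HPw; auto. }
  set (c := fun s => lam s * a s / mu).
  set (T := fun N s => rsum (S N) (fun p => mpowv n H p (u s) j / mu ^ p)).
  set (Rem := fun N => mpowv n H (S N) w j / mu ^ (S N)).
  assert (Hw : forall N, w j = rsum n (fun s => c s * T N s) + Rem N).
  { intros N. rewrite (Hneu N). unfold Rem. f_equal.
    rewrite (rsum_ext _ _ (fun p => rsum n (fun s => c s * (mpowv n H p (u s) j / mu ^ p)))).
    rewrite rsum_swap. apply rsum_ext; intros; unfold T; rewrite rsum_scal; auto.
    intros p Hp. rewrite HPexp. unfold Rdiv. rewrite <- rsum_scalr. apply rsum_ext; intros. unfold c.
    simpl. rewrite Rinv_mult. unfold Rdiv; ring. }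
  assert (HT : forall N s, Rabs (T N s - u s j) <= xi s j).
  { intros N s. unfold T. rewrite rsum_shift. simpl. replace (u s j / 1 + _ - u s j) with
      (rsum N (fun k => mpowv n H (S k) (u s) j / mu ^ S k)) by (simpl; field).
    eapply Rle_trans. apply rsum_abs. eapply Rle_trans; [|apply (partial_le _ _ N (Hxi s j))].
    apply rsum_le. intros k Hk. unfold xi_term. unfold Rdiv. rewrite Rabs_mult, Rabs_inv, <- RPow_abs.
    rewrite Rmult_comm. apply Rmult_le_compat_r. apply Rabs_pos.
    apply inv_pow_le; auto.
    intros k. unfold xi_term. apply Rmult_le_pos. apply pow_le. unfold Rdiv.
    apply Rmult_le_pos; [lra|]. left; apply Rinv_0_lt_compat, Rabs_pos_lt; auto. apply Rabs_pos. }
  assert (HR : forall N, Rabs (Rem N) <= (h / Rabs mu) ^ (S N)).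
  { intros N. unfold Rem. unfold Rdiv. rewrite Rabs_mult, Rabs_inv, <- RPow_abs, Rpow_mult_distr, pow_inv.
    apply Rmult_le_compat_r. left; apply Rinv_0_lt_compat, pow_lt; auto.
    eapply Rle_trans. apply entry_abs_le; eauto. eapply Rle_trans. apply sqrt_le_1_alt. apply (mpow_bound n H h Hspec w Hw1).
    rewrite Hw1, Rmult_1_r, pow_mult. rewrite <- pow_mult, Nat.mul_comm, pow_mult, sqrt_pow2; [right; ring|]. apply pow_le; auto. }
  assert (Hxinn : forall s, 0 <= xi s j).
  { intros s. apply Rle_trans with (rsum 0 (xi_term n H (lam t) (u s) j)). simpl; lra.
    apply partial_le; auto. intros k. unfold xi_term. apply Rmult_le_pos. apply pow_le. unfold Rdiv.
    apply Rmult_le_pos; [lra|]. left; apply Rinv_0_lt_compat, Rabs_pos_lt; auto. apply Rabs_pos. }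
  set (Sp := rsum n (fun s => if Nat.eq_dec s t then 0 else Rabs (c s) * (Rabs (u s j) + xi s j))).
  assert (Hmain : forall z N, Rabs (w j - z * u t j) <=
     Rabs (c t - z) * Rabs (u t j) + Rabs (c t) * xi t j + Sp + (h / Rabs mu) ^ (S N)).
  { intros z N. rewrite (Hw N), (rsum_split n _ t Ht).
    set (S1 := rsum n (fun s => if Nat.eq_dec s t then 0 else c s * T N s)).
    replace (c t * T N t + S1 + Rem N - z * u t j) with
      ((c t - z) * u t j + c t * (T N t - u t j) + S1 + Rem N) by ring.
    assert (Rabs S1 <= Sp).
    { eapply Rle_trans. apply rsum_abs. apply rsum_le. intros s Hs. destruct (Nat.eq_dec s t).
      rewrite Rabs_R0; lra. rewrite Rabs_mult. apply Rmult_le_compat_l. apply Rabs_pos.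
      replace (T N s) with (u s j + (T N s - u s j)) by ring. eapply Rle_trans. apply Rabs_triang.
      specialize (HT N s). lra. }
    specialize (HR N). specialize (HT N t).
    pose proof (Rabs_triang ((c t - z) * u t j + c t * (T N t - u t j) + S1) (Rem N)).
    pose proof (Rabs_triang ((c t - z) * u t j + c t * (T N t - u t j)) S1).
    pose proof (Rabs_triang ((c t - z) * u t j) (c t * (T N t - u t j))).
    rewrite !Rabs_mult in *. pose proof (Rabs_pos (c t)).
    assert (Rabs (c t) * Rabs (T N t - u t j) <= Rabs (c t) * xi t j) by (apply Rmult_le_compat_l; auto).
    lra. }
  assert (Hq : 0 <= h / Rabs mu < 1).
  { split. unfold Rdiv; apply Rmult_le_pos; [auto|left; apply Rinv_0_lt_compat; auto]. apply Rmult_lt_reg_r with (Rabs mu); auto.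
    unfold Rdiv. rewrite Rmult_assoc, Rinv_l by lra. lra. }
  assert (Hlt' : 0 < Rabs (lam t)) by (apply Rabs_pos_lt; auto).
  assert (Hrho : Rabs (lam t / mu - 1) <= 2 * h / Rabs (lam t)).
  { replace (lam t / mu - 1) with ((lam t - mu) * / mu) by (field; auto).
    rewrite Rabs_mult, Rabs_inv. rewrite <- Rabs_Ropp in Hmu. replace (- (mu - lam t)) with (lam t - mu) in Hmu by ring.
    apply Rle_trans with (h * (2 / Rabs (lam t))). apply Rmult_le_compat; auto. apply Rabs_pos.
    left; apply Rinv_0_lt_compat; auto. right; unfold Rdiv; ring. }
  assert (Hct : Rabs (c t) <= 2).
  { unfold c. unfold Rdiv. rewrite !Rabs_mult, Rabs_inv. pose proof (Ha1 t Ht). pose proof (Rabs_pos (a t)).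
    assert (Rabs (lam t) * / Rabs mu <= 2).
    { apply Rle_trans with (Rabs (lam t) * (2 / Rabs (lam t))). apply Rmult_le_compat_l; auto. apply Rabs_pos.
      right; field; lra. }
    assert (0 <= Rabs (lam t) * / Rabs mu) by (apply Rmult_le_pos; [apply Rabs_pos|left; apply Rinv_0_lt_compat; auto]).
    nra. }
  assert (Hcs : forall s, (s < n)%nat -> s <> t -> Rabs (c s) <= 4 * sqrt 2 * h / Delta * Rabs (lam s / lam t)).
  { intros s Hs Hst. unfold c. unfold Rdiv. rewrite !Rabs_mult, !Rabs_inv.
    pose proof (Hoff s Hs Hst). pose proof (Rabs_pos (a s)). pose proof (Rabs_pos (lam s)).
    assert (1 <= sqrt 2) by (rewrite <- sqrt_1; apply sqrt_le_1_alt; lra).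
    assert (0 < / Rabs mu) by (apply Rinv_0_lt_compat; auto).
    assert (0 < / Rabs (lam t)) by (apply Rinv_0_lt_compat; auto).
    assert (0 < / Delta) by (apply Rinv_0_lt_compat; auto).
    apply Rle_trans with (Rabs (lam s) * (2 * h / Delta) * (2 / Rabs (lam t))).
    apply Rmult_le_compat. nra. lra. apply Rmult_le_compat_l; auto. auto.
    unfold Rdiv. assert (0 <= Rabs (lam s) * h * / Delta * / Rabs (lam t)).
    { apply Rmult_le_pos; [|lra]. apply Rmult_le_pos; [|lra]. nra. }
    nra. }
  assert (HSp : Sp <= 4 * sqrt 2 * h / Delta *
        rsum n (fun s => if Nat.eq_dec s t then 0 else Rabs (lam s / lam t) * (Rabs (u s j) + xi s j))).
  { unfold Sp. rewrite <- rsum_scal. apply rsum_le. intros s Hs. destruct (Nat.eq_dec s t). lra.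
    rewrite <- Rmult_assoc. apply Rmult_le_compat_r. pose proof (Rabs_pos (u s j)); pose proof (Hxinn s); lra.
    apply Hcs; auto. }
  assert (Hfin : forall z, Rabs (c t - z) <= 4 * h ^ 2 / Delta ^ 2 + 2 * h / Rabs (lam t) ->
     Rabs (w j - z * u t j) <= (4 * h ^ 2 / Delta ^ 2 + 2 * h / Rabs (lam t)) * Rabs (u t j) + 2 * xi t j
      + 4 * sqrt 2 * h / Delta *
        rsum n (fun s => if Nat.eq_dec s t then 0 else Rabs (lam s / lam t) * (Rabs (u s j) + xi s j))).
  { intros z Hz. eapply Rle_trans. apply (drop_geom _ _ _ Hq (Hmain z)).
    pose proof (Rabs_pos (u t j)). pose proof (Hxinn t).
    assert (Rabs (c t - z) * Rabs (u t j) <= (4 * h ^ 2 / Delta ^ 2 + 2 * h / Rabs (lam t)) * Rabs (u t j))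
      by (apply Rmult_le_compat_r; auto).
    assert (Rabs (c t) * xi t j <= 2 * xi t j) by (apply Rmult_le_compat_r; auto).
    lra. }
  pose proof (Ha1 t Ht) as Hat1.
  destruct (Rle_lt_dec 0 (a t)) as [Hpos|Hneg].
  - eapply Rle_trans. apply Rmin_l. apply Hfin.
    replace (c t - 1) with (lam t / mu * a t - 1) by (unfold c; field; auto).
    eapply Rle_trans. apply abs_coef. rewrite Rabs_pos_eq in Hat1; lra.
    rewrite Rabs_pos_eq in Hat by lra. lra.
  - eapply Rle_trans. apply Rmin_r. apply Hfin.
    replace (c t - -1) with (- (lam t / mu * (- a t) - 1)) by (unfold c; field; auto).
    rewrite Rabs_Ropp. eapply Rle_trans. apply abs_coef. rewrite Rabs_left in Hat1; lra.
    rewrite Rabs_left in Hat by lra. lra.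
Qed.
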